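(* Let $H=(V,\mathcal E)$ be a finite hypergraph with nonnegative hyperedge weights $w_e$ and total weight $W=\sum_e w_e$. For $K\subseteq V$ let $W(K)=\sum_{e\in\mathcal E:\,e\subseteq K}w_e$, and for $\lambda\ge0$ let $\Phi(K,\lambda)=|K|-\lambda W(K)$. Let $\tau\in[0,1]$ and consider the linear program \[\min \sum_{v\in V}x_v \quad\text{s.t.}\quad z_e\le x_v\ \ \forall e\in\mathcal E,\ \forall v\in e;\qquad \sum_{e}w_e z_e\ge \tau W;\qquad 0\le x_v,z_e\le 1.\] Then there exist $\lambda^*\ge0$ and vertex sets $S^-\subseteq S^+\subseteq V$ such that (1) both $S^-$ and $S^+$ minimize $\Phi(\cdot,\lambda^* )$ over all subsets of $V$, and (2) there is $\alpha\in[0,1]$ such that $x^*=(1-\alpha)\mathbf 1_{S^-}+\alpha\mathbf 1_{S^+}$, together with $z^*_e=(1-\alpha)\mathbf 1[e\subseteq S^-]+\alpha\mathbf 1[e\subseteq S^+]$, is an optimal solution of the linear program satisfying the constraint $\sum_e w_e z^*_e\ge\tau W$.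
   Context: $\mathbf 1_S$ denotes the indicator vector of $S\subseteq V$. *)

(* Defs.v *)
From mathcomp Require Import all_boot all_order all_algebra.
From mathcomp Require Import reals.
Set Implicit Arguments. Unset Strict Implicit. Unset Printing Implicit Defensive.
Import Order.TTheory GRing.Theory Num.Theory.
Local Open Scope ring_scope.

Definition totW (R : realType) (V : finType) (E : {set {set V}}) (w : {set V} -> R) : R :=
  \sum_(e in E) w e.

Definition WK (R : realType) (V : finType) (E : {set {set V}}) (w : {set V} -> R)
  (K : {set V}) : R :=
  \sum_(e in E | e \subset K) w e.

Definition Phi (R : realType) (V : finType) (E : {set {set V}}) (w : {set V} -> R)
  (K : {set V}) (lam : R) : R :=
  (#|K|%:R - lam * WK E w K).

Definition lp_feasible (R : realType) (V : finType) (E : {set {set V}}) (w : {set V} -> R)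
  (tau : R) (x : V -> R) (z : {set V} -> R) : Prop :=
  [/\ (forall e, e \in E -> forall v, v \in e -> z e <= x v),
      tau * totW E w <= \sum_(e in E) w e * z e,
      (forall v, 0 <= x v <= 1) &
      (forall e, e \in E -> 0 <= z e <= 1)].

Definition lp_optimal (R : realType) (V : finType) (E : {set {set V}}) (w : {set V} -> R)
  (tau : R) (x : V -> R) (z : {set V} -> R) : Prop :=
  lp_feasible E w tau x z /\
  forall x' z', lp_feasible E w tau x' z' -> \sum_(v : V) x v <= \sum_(v : V) x' v.

Definition ind (R : realType) (b : bool) : R := if b then 1 else 0.

(* Main.v *)
Set Warnings "-notation-overridden,-ambiguous-paths".
Require Import Defs.
From mathcomp Require Import all_boot all_order all_algebra reals ring lra.
Set Implicit Arguments. Unset Strict Implicit. Unset Printing Implicit Defensive.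
Import Order.TTheory GRing.Theory Num.Theory.
Local Open Scope ring_scope.

Lemma seq_argmin (R : realType) (T : eqType) (f : T -> R) (s : seq T) :
  s <> [::] -> exists x, x \in s /\ forall y, y \in s -> f x <= f y.
Proof.
elim: s => [//|a s IH] _.
case: s IH => [|b s] IH.
  by exists a; split; [rewrite inE|move=> y; rewrite inE => /eqP->].
have [x [xs hx]] := IH (fun h => ltac:(discriminate)).
case: (lerP (f a) (f x)) => ha.
  exists a; split; first by rewrite inE eqxx.
  move=> y; rewrite inE => /orP[/eqP->//|/hx]; exact: le_trans.
exists x; split; first by rewrite inE xs orbT.
move=> y; rewrite inE => /orP[/eqP->|/hx//]; exact: ltW.
Qed.

Lemma fin_argmin (R : realType) (T : finType) (P : pred T) (f : T -> R) :
  (exists x, P x) -> exists x, P x /\ forall y, P y -> f x <= f y.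
Proof.
move=> [x0 Px0].
have : enum P <> [::].
  move=> h; have := mem_enum P x0; rewrite h in_nil => /esym.
  by rewrite unfold_in /= Px0.
move=> /(seq_argmin f) [x [xs hx]].
exists x; split; first by rewrite mem_enum in xs.
by move=> y Py; apply: hx; rewrite mem_enum.
Qed.

Definition fmin (R : realType) (T : eqType) (f : T -> R) (d : R) (s : seq T) :=
  foldr (fun K acc => if f K <= acc then f K else acc) d s.

Lemma fmin_le (R : realType) (T : eqType) (f : T -> R) d s :
  forall y, y \in s -> fmin f d s <= f y.
Proof.
elim: s => [//|a s IH] y; rewrite inE /= => /orP[/eqP->|ys].
  by case: ifP => // /negbT; rewrite -ltNge => /ltW.
case: ifP => h; last exact: IH.
exact: le_trans h (IH _ ys).
Qed.

Lemma fmin_att (R : realType) (T : eqType) (f : T -> R) d s :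
  fmin f d s = d \/ exists2 y, y \in s & fmin f d s = f y.
Proof.
elim: s => [|a s IH] /=; first by left.
case: ifP => _; first by right; exists a => //; rewrite inE eqxx.
case: IH => [->|[y ys ->]]; [by left|by right; exists y => //; rewrite inE ys orbT].
Qed.

Lemma sum_ind (R : realType) (V : finType) (P : {set V}) :
  \sum_(v : V) ind R (v \in P) = #|P|%:R.
Proof. by rewrite /ind -big_mkcond /= sumr_const. Qed.

Lemma WK_ind (R : realType) (V : finType) (E : {set {set V}}) (w : {set V} -> R) K :
  WK E w K = \sum_(e in E) w e * ind R (e \subset K).
Proof.
rewrite /WK big_mkcondr /=; apply: eq_bigr => e _.
by rewrite /ind; case: (e \subset K); rewrite ?mulr1 ?mulr0.
Qed.

Lemma lb_ind (R : realType) (V : finType) (E : {set {set V}}) (w : {set V} -> R)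
  (lam : R) (P : {set V}) (x : V -> R) (z : {set V} -> R) :
  (forall e, e \in E -> 0 <= w e) -> 0 <= lam ->
  (forall v, x v = ind R (v \in P)) ->
  (forall e, e \in E -> z e <= 1) ->
  (forall e, e \in E -> forall v, v \in e -> z e <= x v) ->
  Phi E w P lam <= \sum_v x v - lam * \sum_(e in E) w e * z e.
Proof.
move=> hw hl hx hz1 hzx.
rewrite /Phi (eq_bigr _ (fun v _ => hx v)) sum_ind WK_ind.
rewrite lerD2l lerN2; apply: ler_wpM2l => //.
apply: ler_sum => e eE; apply: ler_wpM2l; first exact: hw.
rewrite /ind; case: ifP => sub; first exact: hz1.
move/negbT: sub => /subsetPn [v ve vP].
by have := hzx e eE v ve; rewrite hx /ind (negbTE vP).
Qed.

Lemma lb_noint (R : realType) (V : finType) (E : {set {set V}}) (w : {set V} -> R)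
  (lam : R) (x : V -> R) (z : {set V} -> R) :
  (forall e, e \in E -> 0 <= w e) -> 0 <= lam ->
  (forall v, 0 <= x v <= 1) ->
  ~~ [exists v, (0 < x v) && (x v < 1)] ->
  (forall e, e \in E -> z e <= 1) ->
  (forall e, e \in E -> forall v, v \in e -> z e <= x v) ->
  Phi E w [set v | 0 < x v] lam <= \sum_v x v - lam * \sum_(e in E) w e * z e.
Proof.
move=> hw hl hx hne hz1 hzx; apply: lb_ind => // v.
rewrite inE /ind; have /andP [h0 h1] := hx v.
case: ifP => h.
  apply/eqP; rewrite eq_le h1 /=; apply: contraR hne; rewrite -ltNge => lt1.
  by apply/existsP; exists v; rewrite h lt1.
by apply/eqP; rewrite eq_le h0 andbT leNgt h.
Qed.

Lemma lb (R : realType) (V : finType) (E : {set {set V}}) (w : {set V} -> R)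
  (lam m : R) :
  (forall e, e \in E -> 0 <= w e) -> 0 <= lam ->
  (forall K, m <= Phi E w K lam) ->
  forall n (x : V -> R) (z : {set V} -> R),
  (#|[set v | (0 < x v)%R]| <= n)%N ->
  (forall v, 0 <= x v <= 1) ->
  (forall e, e \in E -> z e <= 1) ->
  (forall e, e \in E -> forall v, v \in e -> z e <= x v) ->
  m <= \sum_v x v - lam * \sum_(e in E) w e * z e.
Proof.
move=> hw hl hm n; elim: n => [|n IH] x z hn hx hz1 hzx.
  case: (boolP [exists v, (0 < x v) && (x v < 1)]) => [/existsP [v1 /andP [p1 l1]] | hne].
    have : (0 < #|[set v | (0 < x v)%R]|)%N by apply/card_gt0P; exists v1; rewrite inE.
    by rewrite lt0n; move: hn; rewrite leqn0 => ->.
  exact: le_trans (hm _) (lb_noint hw hl hx hne hz1 hzx).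
case: (boolP [exists v, (0 < x v) && (x v < 1)]) => [/existsP [v1 /andP [p1 l1]] | hne]; last first.
  exact: le_trans (hm _) (lb_noint hw hl hx hne hz1 hzx).
set P := [set v | 0 < x v] in hn *.
have [v0 [p0 hv0]] := @fin_argmin R V (fun v => 0 < x v) x (ex_intro _ v1 p1).
set a := x v0 in p0 hv0.
have a1 : a < 1 by apply: le_lt_trans (hv0 _ p1) l1.
have ca : 0 < 1 - a by rewrite subr_gt0.
have ca0 : 1 - a != 0 by rewrite gt_eqF.
have xnP : forall v, v \notin P -> x v = 0.
  move=> v; rewrite inE -leNgt => h; apply/eqP; rewrite eq_le h.
  by have /andP[] := hx v.
pose y v := (x v - a * ind R (v \in P)) / (1 - a).
pose zt e := (z e - a * ind R (e \subset P)) / (1 - a).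
have ex : forall v, x v = a * ind R (v \in P) + (1 - a) * y v.
  by move=> v; rewrite /y [(1 - a) * _]mulrC divfK // addrC subrK.
have ez : forall e, z e = a * ind R (e \subset P) + (1 - a) * zt e.
  by move=> e; rewrite /zt [(1 - a) * _]mulrC divfK // addrC subrK.
have zle0 : forall e, e \in E -> ~~ (e \subset P) -> z e <= 0.
  move=> e eE /subsetPn [u ue uP]; rewrite -(xnP u uP); exact: hzx.
have hy : forall v, 0 <= y v <= 1.
  move=> v; rewrite /y /ind; case: (boolP (v \in P)) => vP.
    have : 0 < x v by rewrite inE in vP.
    move=> /hv0 hav; have /andP[_ h1] := hx v.
    rewrite mulr1 divr_ge0 ?subr_ge0 ?hav ?(ltW a1) //= ler_pdivrMr // mul1r.
    by rewrite lerD2r.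
  by rewrite xnP // mulr0 subr0 mul0r lexx ler01.
have hyP : (#|[set v | (0 < y v)%R]| < #|P|)%N.
  apply: proper_card; apply/properP; split.
    apply/subsetP => v; rewrite inE; apply: contraLR => vP.
    by rewrite -leNgt /y xnP // /ind (negbTE vP) mulr0 subr0 mul0r.
  exists v0; first by rewrite inE.
  by rewrite inE /y /ind ifT ?inE // mulr1 subrr mul0r ltxx.
have hz1' : forall e, e \in E -> zt e <= 1.
  move=> e eE; rewrite /zt ler_pdivrMr // mul1r /ind; case: ifP => sub.
    by rewrite mulr1 lerD2r; apply: hz1.
  rewrite mulr0 subr0; apply: le_trans (zle0 e eE (negbT sub)) _; exact: ltW.
have hzx' : forall e, e \in E -> forall v, v \in e -> zt e <= y v.
  move=> e eE v ve; rewrite /zt /y; rewrite ler_pM2r ?invr_gt0 //.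
  rewrite /ind; case: ifP => sub.
    by rewrite (subsetP sub v ve) mulr1 lerD2r; apply: hzx.
  rewrite mulr0 subr0; apply: le_trans (zle0 e eE (negbT sub)) _.
  have /andP[h0 _] := hy v; move: h0; rewrite /y pmulr_lge0 ?invr_gt0 //.
have IHy := IH y zt (leq_trans hyP hn) hy hz1' hzx'.
have sx : \sum_v x v = a * #|P|%:R + (1 - a) * \sum_v y v.
  by rewrite (eq_bigr _ (fun v _ => ex v)) big_split /= -!mulr_sumr sum_ind.
have sz : \sum_(e in E) w e * z e =
    a * WK E w P + (1 - a) * \sum_(e in E) w e * zt e.
  rewrite WK_ind !mulr_sumr -big_split /=; apply: eq_bigr => e _.
  by rewrite ez; ring.
rewrite sx sz.
have hP := hm P; rewrite /Phi in hP.
have t1 : 0 <= a * (#|P|%:R - lam * WK E w P - m) by rewrite mulr_ge0 ?subr_ge0 // ltW.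
have t2 : 0 <= (1 - a) * (\sum_v y v - lam * \sum_(e in E) w e * zt e - m)
  by rewrite mulr_ge0 ?subr_ge0 // ltW.
lra.
Qed.

Lemma WK_mono (R : realType) (V : finType) (E : {set {set V}}) (w : {set V} -> R) (A B : {set V}) :
  (forall e, e \in E -> 0 <= w e) -> A \subset B -> WK E w A <= WK E w B.
Proof.
move=> hw AB; rewrite !WK_ind; apply: ler_sum => e eE; apply: ler_wpM2l; first exact: hw.
rewrite /ind; case: ifP => h; last by case: ifP.
by rewrite (subset_trans h AB).
Qed.

Lemma WK_super (R : realType) (V : finType) (E : {set {set V}}) (w : {set V} -> R) (A B : {set V}) :
  (forall e, e \in E -> 0 <= w e) ->
  WK E w A + WK E w B <= WK E w (A :|: B) + WK E w (A :&: B).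
Proof.
move=> hw; rewrite !WK_ind -!big_split /=; apply: ler_sum => e eE.
rewrite -!mulrDr; apply: ler_wpM2l; first exact: hw.
rewrite subsetI /ind.
case hA: (e \subset A); case hB: (e \subset B) => /=;
  case: ifP => hu; try lra;
  by move/negbT/negP: hu => hu; exfalso; apply: hu; apply: subsetU; rewrite ?hA ?hB ?orbT.
Qed.

Lemma Phi_sub (R : realType) (V : finType) (E : {set {set V}}) (w : {set V} -> R) (A B : {set V}) (lam : R) :
  (forall e, e \in E -> 0 <= w e) -> 0 <= lam ->
  Phi E w (A :|: B) lam + Phi E w (A :&: B) lam <= Phi E w A lam + Phi E w B lam.
Proof.
move=> hw hl; rewrite /Phi.
have hc : (#|A :|: B|%:R + #|A :&: B|%:R = #|A|%:R + #|B|%:R :> R).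
  by rewrite -!natrD cardsUI.
have := WK_super A B hw.
move=> h; have h2 := ler_wpM2l hl h.
rewrite !mulrDr in h2; lra.
Qed.

Lemma ind01 (R : realType) (al : R) b1 b2 : 0 <= al <= 1 ->
  0 <= (1 - al) * ind R b1 + al * ind R b2 <= 1.
Proof. move=> /andP[h0 h1]; rewrite /ind; case: b1; case: b2; apply/andP; split; lra. Qed.

Lemma final2 (R : realType) (V : finType) (E : {set {set V}}) (w : {set V} -> R)
  (tau lam : R) (Sm Sp : {set V}) (al : R) :
  (forall e, e \in E -> 0 <= w e) -> 0 <= lam -> 
  (forall K : {set V}, Phi E w Sm lam <= Phi E w K lam) ->
  (forall K : {set V}, Phi E w Sp lam <= Phi E w K lam) ->
  0 <= al <= 1 ->
  tau * totW E w <= (1 - al) * WK E w Sm + al * WK E w Sp ->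
  lam * ((1 - al) * WK E w Sm + al * WK E w Sp) <= lam * (tau * totW E w) ->
  let xs := fun v : V => (1 - al) * ind R (v \in Sm) + al * ind R (v \in Sp) in
  let zs := fun e : {set V} =>
            (1 - al) * ind R (e \subset Sm) + al * ind R (e \subset Sp) in
  lp_optimal E w tau xs zs /\ tau * totW E w <= \sum_(e in E) w e * zs e.
Proof.
move=> hw hl hm hp hal hC hlC xs zs.
have sz : \sum_(e in E) w e * zs e = (1 - al) * WK E w Sm + al * WK E w Sp.
  rewrite !WK_ind !mulr_sumr -big_split /=; apply: eq_bigr => e _.
  rewrite /zs; ring.
have sx : \sum_v xs v = (1 - al) * #|Sm|%:R + al * #|Sp|%:R.
  by rewrite /xs big_split /= -!mulr_sumr !sum_ind.
rewrite sz; split => //; split.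
  split => //.
  - move=> e eE v ve; rewrite /zs /xs; have /andP[a0 a1] := hal.
    have i1 : forall S : {set V}, ind R (e \subset S) <= ind R (v \in S).
      move=> S; rewrite /ind; case: ifP => h; last by case: ifP.
      by rewrite (subsetP h v ve).
    apply: lerD; apply: ler_wpM2l => //; lra.
  - by rewrite sz.
  - by move=> v; apply: ind01.
  - by move=> e _; apply: ind01.
move=> x' z' [h1 h2 h3 h4].
have hz1 : forall e, e \in E -> z' e <= 1 by move=> e /h4 /andP[].
have := lb hw hl hm (leqnn _) h3 hz1 h1.
have hpm : Phi E w Sp lam = Phi E w Sm lam by apply/eqP; rewrite eq_le hp hm.
move: hpm; rewrite sx /Phi => hpm.
have := ler_wpM2l hl h2.
move: hlC; set C := (1 - al) * _ + _ => hlC.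
have : (1 - al) * #|Sm|%:R + al * #|Sp|%:R =
  (#|Sm|%:R - lam * WK E w Sm) + lam * C.
  rewrite /C; have -> : #|Sp|%:R = #|Sm|%:R - lam * WK E w Sm + lam * WK E w Sp :> R by lra.
  ring.
lra.
Qed.

Lemma final1 (R : realType) (V : finType) (E : {set {set V}}) (w : {set V} -> R)
  (tau lam : R) (K1 K2 : {set V}) :
  (forall e, e \in E -> 0 <= w e) -> 0 <= lam ->
  (forall K : {set V}, Phi E w K1 lam <= Phi E w K lam) ->
  (forall K : {set V}, Phi E w K2 lam <= Phi E w K lam) ->
  tau * totW E w <= WK E w K2 ->
  lam = 0 \/ WK E w K1 <= tau * totW E w ->
  exists (lam : R) (Sm Sp : {set V}),
    [/\ 0 <= lam, Sm \subset Sp,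
        (forall K : {set V}, Phi E w Sm lam <= Phi E w K lam),
        (forall K : {set V}, Phi E w Sp lam <= Phi E w K lam) &
        exists alpha : R, 0 <= alpha <= 1 /\
          let xs := fun v : V => (1 - alpha) * ind R (v \in Sm) + alpha * ind R (v \in Sp) in
          let zs := fun e : {set V} =>
            (1 - alpha) * ind R (e \subset Sm) + alpha * ind R (e \subset Sp) in
          lp_optimal E w tau xs zs /\ tau * totW E w <= \sum_(e in E) w e * zs e].
Proof.
move=> hw hl h1 h2 hx0 hor.
set x0 := tau * totW E w in hx0 hor *.
have e12 : Phi E w K2 lam = Phi E w K1 lam by apply/eqP; rewrite eq_le h2 h1.
have hs := Phi_sub K1 K2 hw hl.
have hU := h1 (K1 :|: K2); have hI := h1 (K1 :&: K2).
have mU : forall K, Phi E w (K1 :|: K2) lam <= Phi E w K lam.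
  by move=> K; apply: le_trans (h1 K); lra.
have mI : forall K, Phi E w (K1 :&: K2) lam <= Phi E w K lam.
  by move=> K; apply: le_trans (h1 K); lra.
exists lam, (K1 :&: K2), (K1 :|: K2); split => //.
  by apply: subset_trans (subsetIl _ _) (subsetUl _ _).
have wI : WK E w (K1 :&: K2) <= WK E w K1 by apply: WK_mono => //; apply: subsetIl.
have wU : WK E w K2 <= WK E w (K1 :|: K2) by apply: WK_mono => //; apply: subsetUr.
set a := WK E w (K1 :&: K2) in wI *; set b := WK E w (K1 :|: K2) in wU *.
case: (lerP x0 a) => hxa.
  exists 0; split; first by rewrite lexx ler01.
  apply: (final2 (lam:=lam)) => //; first by rewrite lexx ler01.
    by rewrite subr0 mul1r mul0r addr0.
  rewrite subr0 mul1r mul0r addr0.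
  case: hor => [->|h]; first by rewrite !mul0r.
  by apply: ler_wpM2l => //; apply: le_trans wI h.
have hba : 0 < b - a by rewrite subr_gt0; apply: lt_le_trans hxa (le_trans hx0 wU).
have hal : 0 <= (x0 - a) / (b - a) <= 1.
  apply/andP; split; first by apply: divr_ge0; [rewrite subr_ge0 ltW | exact: ltW].
  by rewrite ler_pdivrMr // mul1r lerD2r; apply: le_trans hx0 wU.
exists ((x0 - a) / (b - a)); split => //.
have hC : (1 - (x0 - a) / (b - a)) * a + (x0 - a) / (b - a) * b = x0.
  by field; rewrite gt_eqF.
by apply: (final2 (lam:=lam)) => //; rewrite hC.
Qed.

Definition slope (R : realType) (V : finType) (E : {set {set V}}) (w : {set V} -> R)
  (A B : {set V}) : R :=
  (#|B|%:R - #|A|%:R) / (WK E w B - WK E w A).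

Definition posr (R : realType) (s : R) : R := if 0 <= s then s else 0.

Lemma posr_ge0 (R : realType) (s : R) : 0 <= posr s.
Proof. by rewrite /posr; case: ifP. Qed.

Unset Implicit Arguments.

Theorem lemma4 (R : realType) (V : finType) (E : {set {set V}}) (w : {set V} -> R)
  (tau : R) :
  (forall e, e \in E -> 0 <= w e) ->
  0 <= tau <= 1 ->
  exists (lam : R) (Sm Sp : {set V}),
    [/\ 0 <= lam, Sm \subset Sp,
        (forall K : {set V}, Phi E w Sm lam <= Phi E w K lam),
        (forall K : {set V}, Phi E w Sp lam <= Phi E w K lam) &
        exists alpha : R, 0 <= alpha <= 1 /\
          let xs := fun v : V => (1 - alpha) * ind R (v \in Sm) + alpha * ind R (v \in Sp) in
          let zs := fun e : {set V} =>
            (1 - alpha) * ind R (e \subset Sm) + alpha * ind R (e \subset Sp) in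
          lp_optimal E w tau xs zs /\ tau * totW E w <= \sum_(e in E) w e * zs e].
Proof.
move=> hw /andP[t0 t1].
have tW0 : 0 <= totW E w by rewrite /totW; apply: sumr_ge0 => e eE; exact: hw.
have WT : WK E w setT = totW E w.
  by rewrite /WK /totW; apply: eq_bigl => e; rewrite subsetT andbT.
set x0 := tau * totW E w.
have x0T : x0 <= WK E w setT by rewrite WT /x0 ler_piMl.
case: (ltrP x0 (WK E w set0)) => h0.
  have hm0 : forall K : {set V}, Phi E w set0 0 <= Phi E w K 0.
    by move=> K; rewrite /Phi !mul0r !subr0 cards0 ler0n.
  exact: (final1 (tau:=tau) (lam:=0) (K1:=set0) (K2:=set0) hw (lexx 0) hm0 hm0 (ltW h0) (or_introl erefl)).
pose Ph K l := Phi E w K l.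
pose mn l := fmin (fun K => Ph K l) (Ph setT l) (enum {set V}).
have mn_le : forall l K, mn l <= Ph K l by move=> l K; apply: fmin_le; rewrite mem_enum.
have mn_att : forall l, exists K, Ph K l = mn l.
  by move=> l; case: (fmin_att (fun K => Ph K l) (Ph setT l) (enum {set V})) => [h|[y _ h]];
  [exists setT | exists y]; rewrite /mn h.
pose D l := mn l + l * x0.
pose Lam := [seq posr (slope E w A B) | A <- enum {set V}, B <- enum {set V}].
have inLam : forall A B, posr (slope E w A B) \in Lam.
  by move=> A B; apply: allpairs_f; rewrite mem_enum.
have [ls [lsL hls]] : exists ls, ls \in Lam /\ forall l, l \in Lam -> - D ls <= - D l.
  apply: seq_argmin => h; have := inLam set0 set0; by rewrite h.
have ls0 : 0 <= ls by move/allpairsP: lsL => [[A B] [_ _ ->]]; apply: posr_ge0.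
have isminP : forall l K, Ph K l = mn l -> forall K', Ph K l <= Ph K' l.
  by move=> l K -> K'; apply: mn_le.
have claim1 : exists K, Ph K ls = mn ls /\ x0 <= WK E w K.
  case: (boolP [exists K, (Ph K ls == mn ls) && (x0 <= WK E w K)]) =>
    [/existsP [K /andP [/eqP e1 e2]]|hno]; first by exists K.
  exfalso.
  have hno' : forall K, Ph K ls = mn ls -> WK E w K < x0.
    move=> K hK; rewrite ltNge; apply: contra hno => hx; apply/existsP; exists K.
    by rewrite hK eqxx hx.
  have [K00 hK00] := mn_att ls.
  have [K0 [hK0 maxK0]] := @fin_argmin R {set V} (fun K => Ph K ls == mn ls)
     (fun K => - WK E w K) (ex_intro _ K00 (introT eqP hK00)).
  move/eqP: hK0 => hK0.
  have W0x := hno' _ hK0.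
  have [K' [QK' minK']] := @fin_argmin R {set V} (fun K => WK E w K0 < WK E w K)
     (fun K => slope E w K0 K) (ex_intro _ setT (lt_le_trans W0x x0T)).
  have gtls : forall K, WK E w K0 < WK E w K -> ls < slope E w K0 K.
    move=> K hK; have hnm : mn ls < Ph K ls.
      rewrite lt_neqAle mn_le andbT; apply/negP => /eqP h.
      have := maxK0 K; rewrite /= -h eqxx => /(_ isT); rewrite lerN2 leNgt hK.
      by [].
    rewrite /slope ltr_pdivlMr ?subr_gt0 //; move: hnm; rewrite -hK0 /Ph /Phi; lra.
  have l'gt := gtls K' QK'.
  move: minK'; set l' := slope E w K0 K' => minK'.
  have l'L : l' \in Lam by have := inLam K0 K'; rewrite /posr ifT // (le_trans ls0 (ltW l'gt)).
  have minl' : forall K, Ph K0 l' <= Ph K l'.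
    move=> K; case: (lerP (WK E w K) (WK E w K0)) => hK.
      have := mn_le ls K; rewrite -hK0 /Ph /Phi => h.
      have d1 : 0 <= l' - ls by rewrite subr_ge0 ltW.
      have d2 : 0 <= WK E w K0 - WK E w K by rewrite subr_ge0.
      have p := mulr_ge0 d1 d2.
      lra.
    have := minK' K hK; rewrite /slope ler_pdivlMr ?subr_gt0 // /Ph /Phi; lra.
  have Dl' : D l' = Ph K0 l' + l' * x0.
    rewrite /D; congr (_ + _); apply/eqP; rewrite eq_le mn_le /=.
    have [K1 <-] := mn_att l'; exact: minl'.
  have := hls l' l'L; rewrite Dl' /D -hK0 /Ph /Phi lerN2.
  have d1 : 0 < l' - ls by rewrite subr_gt0.
  have d2 : 0 < x0 - WK E w K0 by rewrite subr_gt0.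
  have p := mulr_gt0 d1 d2.
  lra.
have claim2 : 0 < ls -> exists K, Ph K ls = mn ls /\ WK E w K <= x0.
  move=> lsp.
  case: (boolP [exists K, (Ph K ls == mn ls) && (WK E w K <= x0)]) =>
    [/existsP [K /andP [/eqP e1 e2]]|hno]; first by exists K.
  exfalso.
  have hno' : forall K, Ph K ls = mn ls -> x0 < WK E w K.
    move=> K hK; rewrite ltNge; apply: contra hno => hx; apply/existsP; exists K.
    by rewrite hK eqxx hx.
  have [K00 hK00] := mn_att ls.
  have [K0 [hK0 minK0]] := @fin_argmin R {set V} (fun K => Ph K ls == mn ls)
     (fun K => WK E w K) (ex_intro _ K00 (introT eqP hK00)).
  move/eqP: hK0 => hK0.
  have W0x := hno' _ hK0.
  have [K' [QK' maxK']] := @fin_argmin R {set V} (fun K => WK E w K < WK E w K0)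
     (fun K => - slope E w K K0) (ex_intro _ set0 (le_lt_trans h0 W0x)).
  have ltls : forall K, WK E w K < WK E w K0 -> slope E w K K0 < ls.
    move=> K hK; have hnm : mn ls < Ph K ls.
      rewrite lt_neqAle mn_le andbT; apply/negP => /eqP h.
      have := minK0 K; rewrite /= -h eqxx => /(_ isT); rewrite leNgt hK.
      by [].
    rewrite /slope ltr_pdivrMr ?subr_gt0 //; move: hnm; rewrite -hK0 /Ph /Phi; lra.
  have s'lt := ltls K' QK'.
  move: maxK'; set s' := slope E w K' K0 => maxK'.
  set l' := posr s'.
  have l'L : l' \in Lam by apply: inLam.
  have l'lt : l' < ls by rewrite /l' /posr; case: ifP.
  have s'le : s' <= l' by rewrite /l' /posr; case: ifP => // /negbT; rewrite -ltNge => /ltW.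
  have l'0 : 0 <= l' := posr_ge0 s'.
  have minl' : forall K, Ph K0 l' <= Ph K l'.
    move=> K; case: (lerP (WK E w K0) (WK E w K)) => hK.
      have := mn_le ls K; rewrite -hK0 /Ph /Phi => h.
      have d1 : 0 <= ls - l' by rewrite subr_ge0 ltW.
      have d2 : 0 <= WK E w K - WK E w K0 by rewrite subr_ge0.
      have p := mulr_ge0 d1 d2.
      lra.
    have := maxK' K hK; rewrite lerN2 => /le_trans /(_ s'le).
    rewrite /slope ler_pdivrMr ?subr_gt0 // /Ph /Phi; lra.
  have Dl' : D l' = Ph K0 l' + l' * x0.
    rewrite /D; congr (_ + _); apply/eqP; rewrite eq_le mn_le /=.
    have [K1 <-] := mn_att l'; exact: minl'.
  have := hls l' l'L; rewrite Dl' /D -hK0 /Ph /Phi lerN2.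
  have d1 : 0 < ls - l' by rewrite subr_gt0.
  have d2 : 0 < WK E w K0 - x0 by rewrite subr_gt0.
  have p := mulr_gt0 d1 d2.
  lra.
have [K2 [hK2 hx2]] := claim1.
case: (lerP ls 0) => hl.
  have ls00 : ls = 0 by apply/eqP; rewrite eq_le hl ls0.
  exact: (final1 (tau:=tau) (K1:=K2) (K2:=K2) hw ls0 (isminP _ _ hK2)
    (isminP _ _ hK2) hx2 (or_introl ls00)).
have [K1 [hK1 hx1]] := claim2 hl.
exact: (final1 (tau:=tau) (K1:=K1) (K2:=K2) hw ls0 (isminP _ _ hK1)
  (isminP _ _ hK2) hx2 (or_intror hx1)).
Qed.
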